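(* Let $k\geq 4$ and let $G$ be a $(P_1+P_5)$-free graph with a $P_k$-suitable pair $(u,v)$ such that $N(u)$ is an independent set. Then $G$ has a $P_k$-witness structure $\{W(p_1),\dots,W(p_k)\}$ with $W(p_1)=\{u\}$ and $W(p_k)=\{v\}$ such that $W(p_2)\setminus N(u)$ contains a set $S$ with $|S|\le 2$ for which $N(u)\cup S$ induces a connected subgraph of $G$.
   Context: Writing $P_k=p_1\cdots p_k$, a $P_k$-witness structure of $G$ is a partition $\{W(p_1),\dots,W(p_k)\}$ of $V(G)$ into nonempty sets, each inducing a connected subgraph, such that $W(p_i)$ and $W(p_j)$ are joined by an edge iff $|i-j|=1$. A pair of non-adjacent vertices $(u,v)$ is $P_k$-suitable if $G$ has such a witness structure with $W(p_1)=\{u\}$ and $W(p_k)=\{v\}$. A graph is $H$-free if it has no induced subgraph isomorphic to $H$; $+$ denotes disjoint union. *)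

(* Defs.v *)
(* A simple graph is a symmetric irreflexive relation e on a finType T. *)
From mathcomp Require Import all_boot.
Set Implicit Arguments. Unset Strict Implicit. Unset Printing Implicit Defensive.

Section Graphs.
Variable T : finType.
Variable e : rel T.

Definition nbhd (u : T) : {set T} := [set x | e u x].

Definition induced_rel (A : {set T}) : rel T :=
  [rel x y | [&& e x y, x \in A & y \in A]].
Definition connected_set (A : {set T}) : Prop :=
  A != set0 /\ forall x y, x \in A -> y \in A -> connect (induced_rel A) x y.

Definition independent_set (A : {set T}) : Prop :=
  forall x y, x \in A -> y \in A -> ~~ e x y.

Definition set_adj (A B : {set T}) : bool :=
  [exists x in A, exists y in B, e x y].

(* P_k-witness structure, parts indexed by 1..k: W i = W(p_i) *)
Definition witness_structure (k : nat) (W : nat -> {set T}) : Prop :=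
  [/\ (forall i, 1 <= i <= k -> W i != set0 /\ connected_set (W i)),
      (forall i j, 1 <= i <= k -> 1 <= j <= k -> i != j -> [disjoint W i & W j]),
      (forall x, exists2 i, 1 <= i <= k & x \in W i) &
      (forall i j, 1 <= i <= k -> 1 <= j <= k -> i != j ->
         (set_adj (W i) (W j) <-> (i == j.+1) || (j == i.+1)))].

Definition suitable_pair (k : nat) (u v : T) : Prop :=
  ~~ e u v /\
  exists W, [/\ witness_structure k W, W 1 = [set u] & W k = [set v]].

Definition contains_induced (n : nat) (h : rel 'I_n) : Prop :=
  exists f : 'I_n -> T, injective f /\ forall i j, e (f i) (f j) = h i j.

End Graphs.

(* P_1 + P_5 on vertex set {0,...,5}: 0 isolated, 1-2-3-4-5 a path *)
Definition P1P5 : rel 'I_6 :=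
  fun i j => [&& 1 <= i, 1 <= j & (val i == (val j).+1) || (val j == (val i).+1)].

Definition H_free (T : finType) (e : rel T) (n : nat) (h : rel 'I_n) : Prop :=
  ~ contains_induced e h.

(* Main.v *)
Require Import Defs.
From mathcomp Require Import all_boot zify.

Lemma P1P5_rows (i j : 'I_6) : (forall l : 'I_6, P1P5 i l = P1P5 j l) -> i = j.
Proof.
move=> H; apply: val_inj.
have := H (@Ordinal 6 1 isT); have := H (@Ordinal 6 2 isT);
have := H (@Ordinal 6 3 isT); have := H (@Ordinal 6 4 isT);
have := H (@Ordinal 6 5 isT).
clear H; by case: i => [[|[|[|[|[|[|i]]]]]] Hi] //=; case: j => [[|[|[|[|[|[|j]]]]]] Hj].
Qed.

Lemma noP5 (T : finType) (e : rel T) :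
  symmetric e -> irreflexive e -> H_free e P1P5 ->
  forall v p1 p2 p3 p4 p5,
  e p1 p2 -> e p2 p3 -> e p3 p4 -> e p4 p5 ->
  ~~ e p1 p3 -> ~~ e p1 p4 -> ~~ e p1 p5 -> ~~ e p2 p4 -> ~~ e p2 p5 ->
  ~~ e p3 p5 ->
  ~~ e v p1 -> ~~ e v p2 -> ~~ e v p3 -> ~~ e v p4 -> ~~ e v p5 -> False.
Proof.
move=> eS eI Hf v p1 p2 p3 p4 p5 h12 h23 h34 h45 n13 n14 n15 n24 n25 n35
  nv1 nv2 nv3 nv4 nv5.
pose f (i : 'I_6) := nth v [:: v; p1; p2; p3; p4; p5] i.
have fE : forall i j, e (f i) (f j) = P1P5 i j.
  move=> [[|[|[|[|[|[|i]]]]]] Hi] //= [[|[|[|[|[|[|j]]]]]] Hj] //=;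
  rewrite /f /= ?eI ?h12 ?h23 ?h34 ?h45 ?(negbTE n13) ?(negbTE n14)
    ?(negbTE n15) ?(negbTE n24) ?(negbTE n25) ?(negbTE n35)
    ?(negbTE nv1) ?(negbTE nv2) ?(negbTE nv3) ?(negbTE nv4) ?(negbTE nv5) //;
  rewrite eS /= ?eI ?h12 ?h23 ?h34 ?h45 ?(negbTE n13) ?(negbTE n14)
    ?(negbTE n15) ?(negbTE n24) ?(negbTE n25) ?(negbTE n35)
    ?(negbTE nv1) ?(negbTE nv2) ?(negbTE nv3) ?(negbTE nv4) ?(negbTE nv5) //.
apply: Hf; exists f; split=> // i j fij.
apply: P1P5_rows => l; by rewrite -!fE fij.
Qed.

Lemma hub_conn (T : finType) (e : rel T) (B : {set T}) x :
  symmetric e -> x \in B ->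
  (forall p, p \in B -> connect (induced_rel e B) p x) -> connected_set e B.
Proof.
move=> eS xB Hp; split; first by apply/set0Pn; exists x.
move=> p q pB qB; apply: connect_trans (Hp p pB) _.
rewrite sym_connect_sym ?Hp // => a b.
by rewrite /induced_rel /= eS; case: (e b a); rewrite //= andbC.
Qed.

Theorem lemma17 (T : finType) (e : rel T) (k : nat) (u v : T) :
  symmetric e -> irreflexive e ->
  4 <= k ->
  H_free e P1P5 ->
  suitable_pair e k u v ->
  independent_set e (nbhd e u) ->
  exists W : nat -> {set T},
    [/\ witness_structure e k W, W 1 = [set u], W k = [set v] &
      exists S : {set T},
        [/\ S \subset W 2 :\: nbhd e u, #|S| <= 2 &
            connected_set e (nbhd e u :|: S)]].
Proof.
move=> eS eI k4 Hf [nuv [W [WS W1 Wk]]] Hind.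
exists W; split=> //.
case: WS => Hne Hdis Hcov Hadj.
have k1 : 1 <= k <= k by apply/andP; split; lia.
have i11 : 1 <= 1 <= k by apply/andP; split; lia.
have i22 : 1 <= 2 <= k by apply/andP; split; lia.
have NW2 : forall a, e u a -> a \in W 2.
  move=> a ua; have [i Hi ai] := Hcov a.
  have [i1|ne1] := eqVneq i 1.
    by move: ai; rewrite i1 W1 inE => /eqP au; rewrite au eI in ua.
  have : set_adj e (W 1) (W i).
    apply/existsP; exists u; rewrite W1 set11 /=.
    by apply/existsP; exists a; rewrite ai.
  have n1i : 1 != i by rewrite eq_sym.
  move/(Hadj 1 i i11 Hi n1i) => /orP [/eqP Hi1|/eqP <- //].
  move: Hi; lia.
have nW2v : forall w, w \in W 2 -> ~~ e v w.
  move=> w w2; apply/negP => vw.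
  have : set_adj e (W 2) (W k).
    apply/existsP; exists w; rewrite w2 /=.
    by apply/existsP; exists v; rewrite Wk set11 eS.
  have n2k : 2 != k by lia.
  move/(Hadj 2 k i22 k1 n2k) => /orP [/eqP|/eqP] H; lia.
have nvu : ~~ e v u by rewrite eS.
set N := nbhd e u.
set X := W 2 :\: N.
have inN : forall a, (a \in N) = e u a by move=> a; rewrite inE.
have inX : forall x, x \in X -> x \in W 2 /\ ~~ e u x.
  by move=> x; rewrite inE inN => /andP [].
have P5 := @noP5 T e eS eI Hf.
have [a0 a0N] : exists a0, a0 \in N.
  have : set_adj e (W 1) (W 2).
    by apply/(Hadj 1 2 i11 i22 isT).
  case/existsP => x /andP [x1 /existsP [y /andP [y2 xy]]].
  by move: x1 xy; rewrite W1 inE => /eqP -> uy; exists y; rewrite inN.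
have [allX|] := boolP [forall a in N, exists x in X, e a x]; last first.
  rewrite negb_forall_in => /existsP [a /andP [aN]].
  rewrite negb_exists => /forallP noX.
  have NE : N = [set a].
    apply/setP => b; rewrite inE; apply/idP/eqP => [bN|->//].
    rewrite inN in aN; rewrite inN in bN.
    have [_ [_ /(_ a b (NW2 _ aN) (NW2 _ bN))]] := Hne 2 i22.
    rewrite -inN in aN; rewrite -inN in bN.
    case/connectP => [[|w p]] /= ; first by move=> _ ->.
    case/andP => /and3P [aw a2 w2] _ _.
    have wX : w \in X.
      rewrite inE w2 andbT; apply/negP => wN.
      by have := Hind a w; rewrite aN wN => /(_ isT isT); rewrite aw.
    by have := noX w; rewrite wX aw.
  exists set0; split; rewrite ?sub0set ?cards0 // setU0 NE.
  split; first by apply/set0Pn; exists a; rewrite set11.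
  by move=> x y; rewrite !inE => /eqP -> /eqP ->.
pose A x := [set a in N | e x a].
have inA : forall x a, (a \in A x) = (a \in N) && e x a by move=> x a; rewrite inE.
have [x0 x0X] : exists x0, x0 \in X.
  have /forall_inP /(_ a0 a0N) /existsP [x /andP [xX _]] := allX.
  by exists x.
have nonadj : forall x y, x \in X -> y \in X -> ~~ e x y ->
    A x \subset A y \/ A y \subset A x.
  move=> x y xX yX nxy.
  have [sxy|] := boolP (A x \subset A y); first by left.
  case/subsetPn => b bx nby; right; apply/subsetP => a ay.
  apply/negPn/negP => nax.
  move: bx ay; rewrite !inA => /andP [bN xb] /andP [aN ya].
  move: nby nax; rewrite !inA bN aN /= => nyb nxa.
  have [x2 nux] := inX x xX; have [y2 nuy] := inX y yX.
  apply: (P5 v y a u b x); rewrite ?(nW2v _ x2) ?(nW2v _ y2) ?nvu //.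
  - by rewrite eS -inN.
  - by rewrite -inN.
  - by rewrite eS.
  - by rewrite eS.
  - by rewrite eS.
  - by apply: Hind.
  - by rewrite eS.
  - by apply: nW2v; apply: NW2; rewrite -inN.
  - by apply: nW2v; apply: NW2; rewrite -inN.
have adjcov : forall y z, y \in X -> z \in X -> e y z -> ~~ (A y \subset A z) ->
    forall c, c \in N -> (c \in A y) || (c \in A z).
  move=> y z yX zX yz /subsetPn [b hb nbz] c cN.
  apply/negPn/negP; rewrite negb_or => /andP [ncy ncz].
  move: hb nbz ncy ncz; rewrite !inA cN => /andP [bN yb].
  rewrite bN /= => nzb ncy ncz.
  have [y2 nuy] := inX y yX; have [z2 nuz] := inX z zX.
  apply: (P5 v c u b y z); rewrite ?(nW2v _ y2) ?(nW2v _ z2) ?nvu //.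
  - by rewrite eS -inN.
  - by rewrite -inN.
  - by rewrite eS.
  - by apply: Hind.
  - by rewrite eS.
  - by rewrite eS.
  - by rewrite eS.
  - by apply: nW2v; apply: NW2; rewrite -inN.
  - by apply: nW2v; apply: NW2; rewrite -inN.
have [x xX xmax] := @arg_maxnP T x0 (mem X) (fun z => #|A z|) x0X.
have [NAx|] := boolP (N \subset A x).
  exists [set x]; split.
  - by rewrite sub1set.
  - by rewrite cards1.
  apply: (@hub_conn T e _ x eS); first by rewrite !inE eqxx orbT.
  move=> p; rewrite inE => /orP [pN|]; last first.
    by rewrite inE => /eqP ->; apply: connect0.
  apply: connect1; rewrite /induced_rel /= !inE eqxx orbT andbT.
  have := subsetP NAx p pN; rewrite inA => /andP [_ xp].
  by rewrite eS xp -inN pN.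
case/subsetPn => c cN ncx.
have /forall_inP /(_ c cN) /existsP [y /andP [yX cy]] := allX.
have cAy : c \in A y by rewrite inA cN eS.
have nsub : ~~ (A y \subset A x) by apply/subsetPn; exists c.
have xy : e x y.
  apply/negPn/negP => nxy.
  case: (nonadj x y xX yX nxy) => [sxy|syx]; last by rewrite syx in nsub.
  have : A x \proper A y by rewrite properE sxy nsub.
  move/proper_card; have := xmax y yX; rewrite /=.
  by move=> H1 H2; move: (leq_ltn_trans H1 H2); rewrite ltnn.
have yx0 : e y x by rewrite eS.
have cov := adjcov y x yX xX yx0 nsub.
exists [set x; y]; split.
- by apply/subsetP => z /set2P [->|->].
- by rewrite cards2; case: (x != y).
apply: (@hub_conn T e _ x eS); first by rewrite !inE eqxx orbT.
have Bx : x \in N :|: [set x; y] by rewrite !inE eqxx orbT.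
have By : y \in N :|: [set x; y] by rewrite !inE eqxx !orbT.
have yx : connect (induced_rel e (N :|: [set x; y])) y x.
  by apply: connect1; rewrite /induced_rel /= Bx By eS xy.
move=> p; rewrite inE => /orP [pN|]; last first.
  rewrite !inE => /orP [/eqP ->|/eqP ->] //; exact: connect0.
have pB : p \in N :|: [set x; y] by rewrite inE pN.
case/orP: (cov p pN); rewrite inA => /andP [_ qp].
  apply: connect_trans yx; apply: connect1.
  by rewrite /induced_rel /= pB By eS qp.
by apply: connect1; rewrite /induced_rel /= pB Bx eS qp.
Qed.
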